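(* Let $\ell:K(H\times\mathrm{Id})\to H\widehat K$ be an abstract GSOS rule with $\ell$-interpretation $b:KC\to C$, let $V$ be an endofunctor, $F=K+V$, and let $e:V(H\times\mathrm{Id})\to H\widehat F$ be an $\ell$-rps. Then there is a unique $V$-algebra $s:VC\to C$ (the interpreted solution of $e$) such that $$s=c^{-1}\cdot H[b,s]^\sharp\cdot e_C\cdot V\langle c,\mathrm{id}_C\rangle.$$ Moreover, $c^{-1}\cdot H[b,s]^\sharp:H\widehat FC\to C$ is a completely iterative algebra for $H\widehat F$.
   Context: Let $\mathcal A$ be a category with binary products and coproducts, let $H:\mathcal A\to\mathcal A$ be a functor with a terminal coalgebra $c:C\to HC$ (an isomorphism by Lambek's lemma). For an endofunctor $G$ we assume every object $X$ has a free $G$-algebra $\varphi_X:G\widehat GX\to\widehat GX$ with universal morphism $\eta_X$, so $\widehat G$ is the free monad on $G$ with universal natural transformation $\kappa:G\to\widehat G$; for a $G$-algebra $a:GA\to A$, $a^\sharp:\widehat GA\to A$ is the unique $G$-algebra homomorphism with $a^\sharp\cdot\eta_A=\mathrm{id}_A$. An abstract GSOS rule for $K$ is a natural transformation $\ell:K(H\times\mathrm{Id})\to H\widehat K$; its interpretation is the unique $b:KC\to C$ with $c\cdot b=Hb^\sharp\cdot\ell_C\cdot K\langle c,\mathrm{id}_C\rangle$. An $\ell$-rps is a natural transformation $e:V(H\times\mathrm{Id})\to H\widehat F$ with $F=K+V$. A $G$-algebra $a:GA\to A$ is a completely iterative algebra if every $e:X\to GX+A$ has a unique $e^\dagger:X\to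 A$ with $e^\dagger=[a,\mathrm{id}_A]\cdot(Ge^\dagger+\mathrm{id}_A)\cdot e$. *)

(* Defs.v *)
Record Category := {
  Ob :> Type;
  Hom : Ob -> Ob -> Type;
  comp : forall {A B D : Ob}, Hom B D -> Hom A B -> Hom A D;
  idm : forall A : Ob, Hom A A;
  comp_assoc : forall A B D E (h : Hom D E) (g : Hom B D) (f : Hom A B),
      comp h (comp g f) = comp (comp h g) f;
  comp_id_l : forall A B (f : Hom A B), comp (idm B) f = f;
  comp_id_r : forall A B (f : Hom A B), comp f (idm A) = f }.
Arguments Hom {c} _ _.
Arguments comp {c A B D} _ _.
Arguments idm {c} A.
Notation "g \o f" := (comp g f) (at level 40, left associativity).

Section Cat.
Context (Cat : Category).

Record BinProducts := {
  prodO : Cat -> Cat -> Cat;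
  pi1 : forall A B, Hom (prodO A B) A;
  pi2 : forall A B, Hom (prodO A B) B;
  pair : forall X A B, Hom X A -> Hom X B -> Hom X (prodO A B);
  pair_pi1 : forall X A B (f : Hom X A) (g : Hom X B), pi1 A B \o pair X A B f g = f;
  pair_pi2 : forall X A B (f : Hom X A) (g : Hom X B), pi2 A B \o pair X A B f g = g;
  pair_uniq : forall X A B (f : Hom X A) (g : Hom X B) (h : Hom X (prodO A B)),
      pi1 A B \o h = f -> pi2 A B \o h = g -> h = pair X A B f g }.
Arguments pair _ {X A B} _ _.

Record BinCoproducts := {
  coprodO : Cat -> Cat -> Cat;
  inl : forall A B, Hom A (coprodO A B);
  inr : forall A B, Hom B (coprodO A B);
  copair : forall A B X, Hom A X -> Hom B X -> Hom (coprodO A B) X;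
  copair_inl : forall A B X (f : Hom A X) (g : Hom B X), copair A B X f g \o inl A B = f;
  copair_inr : forall A B X (f : Hom A X) (g : Hom B X), copair A B X f g \o inr A B = g;
  copair_uniq : forall A B X (f : Hom A X) (g : Hom B X) (h : Hom (coprodO A B) X),
      h \o inl A B = f -> h \o inr A B = g -> h = copair A B X f g }.
Arguments copair _ {A B X} _ _.

Record Functor := {
  fob : Cat -> Cat;
  fmap : forall A B, Hom A B -> Hom (fob A) (fob B);
  fmap_id : forall A, fmap A A (idm A) = idm (fob A);
  fmap_comp : forall A B D (g : Hom B D) (f : Hom A B),
      fmap A D (g \o f) = fmap B D g \o fmap A B f }.
Arguments fmap _ {A B} _.

(** Free G-algebras on every object, for an endofunctor G given by its object
    and morphism actions G0, G1: phi X : G (Ghat X) -> Ghat X with universal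
    morphism eta X : X -> Ghat X; [ext a f] is the unique G-algebra
    homomorphism from (Ghat X, phi X) to (A, a) extending f. *)
Record FreeAlgs (G0 : Cat -> Cat) (G1 : forall A B, Hom A B -> Hom (G0 A) (G0 B)) := {
  hob : Cat -> Cat;
  phi : forall X, Hom (G0 (hob X)) (hob X);
  eta : forall X, Hom X (hob X);
  ext : forall A (a : Hom (G0 A) A) X (f : Hom X A), Hom (hob X) A;
  ext_eta : forall A (a : Hom (G0 A) A) X (f : Hom X A), ext A a X f \o eta X = f;
  ext_hom : forall A (a : Hom (G0 A) A) X (f : Hom X A),
      ext A a X f \o phi X = a \o G1 _ _ (ext A a X f);
  ext_uniq : forall A (a : Hom (G0 A) A) X (f : Hom X A) (h : Hom (hob X) A),
      h \o eta X = f -> h \o phi X = a \o G1 _ _ h -> h = ext A a X f }.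
Arguments hob {G0 G1} _ _.
Arguments phi {G0 G1} _ _.
Arguments eta {G0 G1} _ _.
Arguments ext {G0 G1} _ {A} _ {X} _.

Context (P : BinProducts) (Q : BinCoproducts).

Definition hxid (H : Functor) {X Y : Cat} (f : Hom X Y) :
  Hom (prodO P (fob H X) X) (prodO P (fob H Y) Y) :=
  pair P (fmap H f \o pi1 P _ _) (f \o pi2 P _ _).

Definition coprodmap {A B A' B' : Cat} (f : Hom A A') (g : Hom B B') :
  Hom (coprodO Q A B) (coprodO Q A' B') :=
  copair Q (inl Q _ _ \o f) (inr Q _ _ \o g).

Definition sumF0 (K V : Functor) (X : Cat) : Cat := coprodO Q (fob K X) (fob V X).
Definition sumF1 (K V : Functor) (A B : Cat) (f : Hom A B) :
  Hom (sumF0 K V A) (sumF0 K V B) := coprodmap (fmap K f) (fmap V f).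

Definition hat {G0 G1} (FA : FreeAlgs G0 G1) {X Y : Cat} (f : Hom X Y) :
  Hom (hob FA X) (hob FA Y) := ext FA (phi FA Y) (eta FA Y \o f).
Definition sharp {G0 G1} (FA : FreeAlgs G0 G1) {A : Cat} (a : Hom (G0 A) A) :
  Hom (hob FA A) A := ext FA a (idm A).

Definition is_terminal_coalg (H : Functor) (C : Cat) (c : Hom C (fob H C)) : Prop :=
  forall A (a : Hom A (fob H A)), exists! h : Hom A C, c \o h = fmap H h \o a.

Definition is_GSOS_rule (H K : Functor) (FK : FreeAlgs (fob K) (@fmap K))
  (l : forall X : Cat, Hom (fob K (prodO P (fob H X) X)) (fob H (hob FK X))) : Prop :=
  forall X Y (f : Hom X Y), l Y \o fmap K (hxid H f) = fmap H (hat FK f) \o l X.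

Definition is_rps (H K V : Functor) (FF : FreeAlgs (sumF0 K V) (sumF1 K V))
  (e : forall X : Cat, Hom (fob V (prodO P (fob H X) X)) (fob H (hob FF X))) : Prop :=
  forall X Y (f : Hom X Y), e Y \o fmap V (hxid H f) = fmap H (hat FF f) \o e X.

Definition is_cia (G0 : Cat -> Cat) (G1 : forall A B, Hom A B -> Hom (G0 A) (G0 B))
  (A : Cat) (a : Hom (G0 A) A) : Prop :=
  forall X (e : Hom X (coprodO Q (G0 X) A)),
    exists! d : Hom X A, d = copair Q a (idm A) \o coprodmap (G1 _ _ d) (idm A) \o e.

Definition HFhat0 (H : Functor) {G0 G1} (FA : FreeAlgs G0 G1) (X : Cat) : Cat :=
  fob H (hob FA X).
Definition HFhat1 (H : Functor) {G0 G1} (FA : FreeAlgs G0 G1) (A B : Cat) (f : Hom A B) :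
  Hom (HFhat0 H FA A) (HFhat0 H FA B) := fmap H (hat FA f).

End Cat.
Arguments FreeAlgs {Cat} G0 G1.
Arguments pair {Cat} _ {X A B} _ _.
Arguments copair {Cat} _ {A B X} _ _.
Arguments fmap {Cat} _ {A B} _.
Arguments hob {Cat G0 G1} _ _.
Arguments phi {Cat G0 G1} _ _.
Arguments eta {Cat G0 G1} _ _.
Arguments ext {Cat G0 G1} _ {A} _ {X} _.
Arguments fob {Cat} _ _.
Arguments prodO {Cat} _ _ _.
Arguments pi1 {Cat} _ _ _.
Arguments pi2 {Cat} _ _ _.
Arguments coprodO {Cat} _ _ _.
Arguments inl {Cat} _ _ _.
Arguments inr {Cat} _ _ _.
Arguments hxid {Cat} _ _ {X Y} _.
Arguments coprodmap {Cat} _ {A B A' B'} _ _.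
Arguments sumF0 {Cat} _ _ _ _.
Arguments sumF1 {Cat} _ _ _ _ _ _.
Arguments hat {Cat G0 G1} _ {X Y} _.
Arguments sharp {Cat G0 G1} _ {A} _.
Arguments is_terminal_coalg {Cat} _ _ _.
Arguments is_GSOS_rule {Cat} _ _ _ _ _.
Arguments is_rps {Cat} _ _ _ _ _ _ _.
Arguments is_cia {Cat} _ _ _ _ _.
Arguments HFhat0 {Cat} _ {G0 G1} _ _.
Arguments HFhat1 {Cat} _ {G0 G1} _ _ _ _.

(* Main.v *)
Require Import Defs.

Ltac ra := repeat rewrite <- comp_assoc.


Section Basics.
Context (Cat : Category).

Lemma compR {A B D E : Cat} (u : Hom B D) (v : Hom A B) (w : Hom A D) :
  u \o v = w -> forall (k : Hom E A), u \o (v \o k) = w \o k.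
Proof. intros Hw k. rewrite comp_assoc, Hw. reflexivity. Qed.

Context (P : BinProducts Cat) (Q : BinCoproducts Cat).

Lemma pair_ext {X A B : Cat} (h1 h2 : Hom X (prodO P A B)) :
  pi1 P A B \o h1 = pi1 P A B \o h2 -> pi2 P A B \o h1 = pi2 P A B \o h2 -> h1 = h2.
Proof.
  intros E1 E2. rewrite (pair_uniq _ P X A B _ _ h1 E1 E2).
  symmetry. apply pair_uniq; reflexivity.
Qed.

Lemma pair_comp {X Y A B : Cat} (f : Hom X A) (g : Hom X B) (k : Hom Y X) :
  pair P f g \o k = pair P (f \o k) (g \o k).
Proof.
  apply pair_uniq; rewrite comp_assoc; [rewrite pair_pi1|rewrite pair_pi2]; reflexivity.
Qed.

Lemma pi1_pair {X A B : Cat} (f : Hom X A) (g : Hom X B) : pi1 P A B \o pair P f g = f.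
Proof. apply pair_pi1. Qed.
Lemma pi2_pair {X A B : Cat} (f : Hom X A) (g : Hom X B) : pi2 P A B \o pair P f g = g.
Proof. apply pair_pi2. Qed.

Lemma hxid_pair (F : Functor Cat) {X Y Z : Cat} (f : Hom X Y) (u : Hom Z (fob F X)) (v : Hom Z X) :
  hxid P F f \o pair P u v = pair P (fmap F f \o u) (f \o v).
Proof.
  unfold hxid. rewrite pair_comp. ra. rewrite pi1_pair, pi2_pair. reflexivity.
Qed.

Lemma copair_ext {A B X : Cat} (h1 h2 : Hom (coprodO Q A B) X) :
  h1 \o inl Q A B = h2 \o inl Q A B -> h1 \o inr Q A B = h2 \o inr Q A B -> h1 = h2.
Proof.
  intros E1 E2. rewrite (copair_uniq _ Q A B X _ _ h1 E1 E2).
  symmetry. apply copair_uniq; reflexivity.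
Qed.

Lemma comp_copair {A B X Y : Cat} (f : Hom A X) (g : Hom B X) (k : Hom X Y) :
  k \o copair Q f g = copair Q (k \o f) (k \o g).
Proof.
  apply copair_uniq; rewrite <- comp_assoc; [rewrite copair_inl|rewrite copair_inr]; reflexivity.
Qed.

Lemma copair_coprodmap {A B A' B' X : Cat} (f : Hom A A') (g : Hom B B') (u : Hom A' X) (v : Hom B' X) :
  copair Q u v \o coprodmap Q f g = copair Q (u \o f) (v \o g).
Proof.
  unfold coprodmap. rewrite comp_copair, !comp_assoc, copair_inl, copair_inr. reflexivity.
Qed.

Lemma fmap_pair_pi2 (F : Functor Cat) {X A B : Cat} (f : Hom X A) (g : Hom X B) :
  fmap F (pi2 P A B) \o fmap F (pair P f g) = fmap F g.
Proof. rewrite <- fmap_comp, pi2_pair. reflexivity. Qed.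

End Basics.

Section Free.
Context (Cat : Category) (G : Functor Cat) (FA : FreeAlgs (fob G) (@fmap Cat G)).

Notation T := (hob FA).
Notation et X := (eta FA X).
Notation ph X := (phi FA X).
Definition mu (X : Cat) : Hom (T (T X)) (T X) := sharp FA (ph X).

Lemma ext_ch {A X : Cat} (a : Hom (fob G A) A) (f : Hom X A) (h : Hom (T X) A) :
  h \o et X = f -> h \o ph X = a \o fmap G h -> h = ext FA a f.
Proof. apply ext_uniq. Qed.

Lemma hat_eta {X Y : Cat} (f : Hom X Y) : hat FA f \o et X = et Y \o f.
Proof. apply ext_eta. Qed.
Lemma hat_phi {X Y : Cat} (f : Hom X Y) : hat FA f \o ph X = ph Y \o fmap G (hat FA f).
Proof. apply ext_hom. Qed.
Lemma sharp_eta {A : Cat} (a : Hom (fob G A) A) : sharp FA a \o et A = idm A.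
Proof. apply ext_eta. Qed.
Lemma sharp_phi {A : Cat} (a : Hom (fob G A) A) : sharp FA a \o ph A = a \o fmap G (sharp FA a).
Proof. apply ext_hom. Qed.

Lemma hat_id (X : Cat) : hat FA (idm X) = idm (T X).
Proof.
  symmetry. unfold hat. apply ext_ch.
  - rewrite !comp_id_l, comp_id_r. reflexivity.
  - rewrite fmap_id, comp_id_l, comp_id_r. reflexivity.
Qed.

Lemma hat_comp {X Y Z : Cat} (g : Hom Y Z) (f : Hom X Y) :
  hat FA (g \o f) = hat FA g \o hat FA f.
Proof.
  symmetry. unfold hat at 3. apply ext_ch.
  - rewrite <- comp_assoc, hat_eta, comp_assoc, hat_eta, comp_assoc. reflexivity.
  - rewrite <- comp_assoc, hat_phi, comp_assoc, hat_phi, <- comp_assoc, <- fmap_comp. reflexivity.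
Qed.

Lemma alg_hom_comp {A B D : Cat} (a : Hom (fob G A) A) (b : Hom (fob G B) B) (d : Hom (fob G D) D)
  (k : Hom A B) (m : Hom B D) :
  k \o a = b \o fmap G k -> m \o b = d \o fmap G m -> (m \o k) \o a = d \o fmap G (m \o k).
Proof.
  intros E1 E2. rewrite <- comp_assoc, E1, comp_assoc, E2, <- comp_assoc, <- fmap_comp. reflexivity.
Qed.

Lemma ext_sharp {A X : Cat} (a : Hom (fob G A) A) (f : Hom X A) :
  ext FA a f = sharp FA a \o hat FA f.
Proof.
  symmetry. apply ext_ch.
  - rewrite <- comp_assoc, hat_eta, comp_assoc, sharp_eta, comp_id_l. reflexivity.
  - apply alg_hom_comp with (b := ph A). apply hat_phi. apply sharp_phi.
Qed.

Lemma alg_hom_sharp {A B : Cat} (a : Hom (fob G A) A) (b : Hom (fob G B) B) (k : Hom A B) :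
  k \o a = b \o fmap G k -> k \o sharp FA a = sharp FA b \o hat FA k.
Proof.
  intros E. rewrite <- ext_sharp. apply ext_ch.
  - rewrite <- comp_assoc, sharp_eta, comp_id_r. reflexivity.
  - apply alg_hom_comp with (b := a). apply sharp_phi. exact E.
Qed.

Lemma sharp_mu {A : Cat} (a : Hom (fob G A) A) :
  sharp FA a \o mu A = sharp FA a \o hat FA (sharp FA a).
Proof. apply alg_hom_sharp. apply sharp_phi. Qed.

Lemma mu_eta (X : Cat) : mu X \o et (T X) = idm (T X).
Proof. apply sharp_eta. Qed.

Lemma mu_hat_eta (X : Cat) : mu X \o hat FA (et X) = idm (T X).
Proof.
  unfold mu. rewrite <- ext_sharp. symmetry. rewrite <- (hat_id X). unfold hat.
  f_equal. rewrite comp_id_r. reflexivity.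
Qed.

Lemma mu_phi (X : Cat) : mu X \o ph (T X) = ph X \o fmap G (mu X).
Proof. apply sharp_phi. Qed.

Lemma mu_nat {X Y : Cat} (f : Hom X Y) : hat FA f \o mu X = mu Y \o hat FA (hat FA f).
Proof. apply alg_hom_sharp. apply hat_phi. Qed.

Lemma mu_assoc (X : Cat) : mu X \o mu (T X) = mu X \o hat FA (mu X).
Proof. apply sharp_mu. Qed.

End Free.


Section Coalg.
Context (Cat : Category) (P : BinProducts Cat) (H G : Functor Cat)
  (FA : FreeAlgs (fob G) (@fmap Cat G))
  (r : forall X : Cat, Hom (fob G (prodO P (fob H X) X)) (fob H (hob FA X)))
  (Hr : is_GSOS_rule P H G FA r).

Notation T := (hob FA).
Notation et X := (eta FA X).
Notation ph X := (phi FA X).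
Notation mu := (mu Cat G FA).

Definition zalg (W : Cat) :
  Hom (fob G (prodO P (fob H (T W)) (T W))) (prodO P (fob H (T W)) (T W)) :=
  pair P (fmap H (mu W) \o r (T W)) (ph W \o fmap G (pi2 P _ _)).

Definition kmap {W : Cat} (g : Hom W (fob H (T W))) : Hom (T W) (prodO P (fob H (T W)) (T W)) :=
  ext FA (zalg W) (pair P g (et W)).

Definition lift {W : Cat} (g : Hom W (fob H (T W))) : Hom (T W) (fob H (T W)) :=
  pi1 P _ _ \o kmap g.

Lemma kmap_pair {W : Cat} (g : Hom W (fob H (T W))) : kmap g = pair P (lift g) (idm _).
Proof.
  apply pair_uniq. reflexivity.
  rewrite <- (hat_id Cat G FA W). unfold hat. apply ext_ch.
  - unfold kmap. rewrite <- comp_assoc, ext_eta, pi2_pair, comp_id_r. reflexivity.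
  - unfold kmap. rewrite <- comp_assoc, ext_hom, comp_assoc. unfold zalg.
    rewrite pi2_pair, <- comp_assoc, <- fmap_comp. reflexivity.
Qed.

Lemma lift_eta {W : Cat} (g : Hom W (fob H (T W))) : lift g \o et W = g.
Proof. unfold lift, kmap. rewrite <- comp_assoc, ext_eta, pi1_pair. reflexivity. Qed.

Lemma lift_phi {W : Cat} (g : Hom W (fob H (T W))) :
  lift g \o ph W = fmap H (mu W) \o r (T W) \o fmap G (pair P (lift g) (idm _)).
Proof.
  rewrite <- kmap_pair. unfold lift. unfold kmap at 1.
  rewrite <- comp_assoc, ext_hom, comp_assoc. unfold zalg. rewrite pi1_pair. reflexivity.
Qed.

Lemma zhom {W Y : Cat} (k : Hom (T W) (T Y)) :
  k \o ph W = ph Y \o fmap G k -> k \o mu W = mu Y \o hat FA k ->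
  hxid P H k \o zalg W = zalg Y \o fmap G (hxid P H k).
Proof.
  intros E1 E2. unfold zalg. rewrite pair_comp. unfold hxid at 1. rewrite pair_comp.
  apply pair_ext; rewrite !pi1_pair || rewrite !pi2_pair.
  - ra. rewrite pi1_pair. rewrite Hr. rewrite !comp_assoc, <- !fmap_comp, E2. reflexivity.
  - ra. rewrite pi2_pair. rewrite !comp_assoc, E1. ra. rewrite <- !fmap_comp.
    unfold hxid. rewrite pi2_pair. reflexivity.
Qed.

Lemma lift_hat {W Y : Cat} (f : Hom W Y) (g : Hom W (fob H (T W))) (d : Hom Y (fob H (T Y))) :
  d \o f = fmap H (hat FA f) \o g -> lift d \o hat FA f = fmap H (hat FA f) \o lift g.
Proof.
  intros E.
  assert (K : kmap d \o hat FA f = hxid P H (hat FA f) \o kmap g).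
  { transitivity (ext FA (zalg Y) (pair P d (et Y) \o f)).
    - apply ext_ch.
      + unfold kmap. rewrite <- comp_assoc, hat_eta, comp_assoc, ext_eta. reflexivity.
      + apply alg_hom_comp with (b := ph Y). apply hat_phi. apply ext_hom.
    - symmetry. apply ext_ch.
      + unfold kmap. rewrite <- comp_assoc, ext_eta, hxid_pair, pair_comp, E, hat_eta. reflexivity.
      + apply alg_hom_comp with (b := zalg W). apply ext_hom.
        apply zhom. apply hat_phi. apply mu_nat. }
  rewrite !kmap_pair in K. unfold lift at 2. rewrite kmap_pair, pi1_pair.
  transitivity (pi1 P _ _ \o (pair P (lift d) (idm _) \o hat FA f)).
  { rewrite comp_assoc, pi1_pair. reflexivity. }
  rewrite K, hxid_pair, pi1_pair. reflexivity.
Qed.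

Lemma lift_mu {W : Cat} (g : Hom W (fob H (T W))) :
  lift g \o mu W = fmap H (mu W) \o lift (fmap H (et (T W)) \o lift g).
Proof.
  assert (K : kmap g \o mu W = hxid P H (mu W) \o kmap (fmap H (et (T W)) \o lift g)).
  { transitivity (ext FA (zalg W) (kmap g)).
    - apply ext_ch.
      + rewrite <- comp_assoc, mu_eta, comp_id_r. reflexivity.
      + apply alg_hom_comp with (b := ph W). apply mu_phi. apply ext_hom.
    - symmetry. apply ext_ch.
      + unfold kmap at 1. rewrite <- comp_assoc, ext_eta, hxid_pair, comp_assoc, <- fmap_comp.
        rewrite mu_eta, fmap_id, comp_id_l, kmap_pair. reflexivity.
      + apply alg_hom_comp with (b := zalg (T W)). apply ext_hom.
        apply zhom. apply mu_phi. apply mu_assoc. }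
  rewrite !kmap_pair in K. unfold lift at 2. rewrite kmap_pair, pi1_pair.
  transitivity (pi1 P _ _ \o (pair P (lift g) (idm _) \o mu W)).
  { rewrite comp_assoc, pi1_pair. reflexivity. }
  rewrite K, hxid_pair, pi1_pair. reflexivity.
Qed.

End Coalg.


Section Final.
Context (Cat : Category) (P : BinProducts Cat) (Q : BinCoproducts Cat) (H G : Functor Cat)
  (FA : FreeAlgs (fob G) (@fmap Cat G))
  (r : forall X : Cat, Hom (fob G (prodO P (fob H X) X)) (fob H (hob FA X)))
  (Hr : is_GSOS_rule P H G FA r)
  (C : Cat) (c : Hom C (fob H C)) (Hterm : is_terminal_coalg H C c)
  (cinv : Hom (fob H C) C) (Hcinv1 : cinv \o c = idm C) (Hcinv2 : c \o cinv = idm (fob H C)).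

Notation T := (hob FA).
Notation et X := (eta FA X).
Notation ph X := (phi FA X).
Notation mu := (mu Cat G FA).
Notation lift := (lift Cat P H G FA r).

Lemma coalg_uniq {A : Cat} (al : Hom A (fob H A)) (f1 f2 : Hom A C) :
  c \o f1 = fmap H f1 \o al -> c \o f2 = fmap H f2 \o al -> f1 = f2.
Proof.
  intros E1 E2. destruct (Hterm A al) as [h [_ U]].
  rewrite <- (U f1 E1). apply U. exact E2.
Qed.

Lemma c_mono {A : Cat} (u v : Hom A C) : c \o u = c \o v -> u = v.
Proof.
  intros E. rewrite <- (comp_id_l _ _ _ u), <- (comp_id_l _ _ _ v), <- Hcinv1, <- !comp_assoc, E.
  reflexivity.
Qed.

Definition interp (a : Hom (fob G C) C) : Prop :=
  c \o a = fmap H (sharp FA a) \o r C \o fmap G (pair P c (idm C)).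

Lemma pair_c_alg (a : Hom (fob G C) C) : interp a ->
  pair P c (idm C) \o a =
  pair P (fmap H (sharp FA a) \o r C) (a \o fmap G (pi2 P _ _)) \o fmap G (pair P c (idm C)).
Proof.
  intros Ia. rewrite pair_comp. apply pair_ext.
  - rewrite !comp_assoc, !pi1_pair. exact Ia.
  - rewrite !comp_assoc, !pi2_pair, comp_id_l. ra. rewrite <- fmap_comp, pi2_pair, fmap_id, comp_id_r.
    reflexivity.
Qed.

Lemma sharp_coalg (a : Hom (fob G C) C) (Ia : interp a) {W : Cat}
  (g0 : Hom W (fob H (T W))) (g : Hom W C) :
  c \o g = fmap H (sharp FA a \o hat FA g) \o g0 ->
  c \o (sharp FA a \o hat FA g) = fmap H (sharp FA a \o hat FA g) \o lift g0.
Proof.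
  intros E. set (m := sharp FA a \o hat FA g).
  set (w := pair P (fmap H (sharp FA a) \o r C) (a \o fmap G (pi2 P _ _))).
  assert (K : pair P c (idm C) \o m = hxid P H m \o kmap Cat P H G FA r g0).
  { transitivity (ext FA w (pair P (c \o g) g)).
    - apply ext_ch.
      + unfold m. ra. rewrite hat_eta. rewrite (comp_assoc _ _ _ _ _ (sharp FA a)), sharp_eta, comp_id_l.
        rewrite pair_comp, comp_id_l. reflexivity.
      + apply alg_hom_comp with (b := a). unfold m.
        apply alg_hom_comp with (b := ph C). apply hat_phi. apply sharp_phi.
        apply pair_c_alg. exact Ia.
    - symmetry. apply ext_ch.
      + unfold kmap. rewrite <- comp_assoc, ext_eta, hxid_pair, E. unfold m.
        rewrite <- comp_assoc, hat_eta, comp_assoc, sharp_eta, comp_id_l. reflexivity.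
      + apply alg_hom_comp with (b := zalg Cat P H G FA r W). apply ext_hom.
        unfold zalg, w. rewrite hxid_pair, pair_comp. f_equal.
        * ra. rewrite Hr. rewrite !comp_assoc, <- !fmap_comp.
          f_equal. f_equal. unfold m. rewrite <- comp_assoc, mu_nat, comp_assoc, sharp_mu.
          rewrite <- comp_assoc, <- hat_comp. reflexivity.
        * ra. rewrite <- fmap_comp. unfold hxid. rewrite pi2_pair, fmap_comp.
          rewrite !comp_assoc. f_equal. unfold m. rewrite <- comp_assoc, hat_phi, comp_assoc, sharp_phi.
          rewrite <- comp_assoc, <- fmap_comp. reflexivity. }
  rewrite kmap_pair in K.
  transitivity (pi1 P _ _ \o (pair P c (idm C) \o m)).
  { rewrite comp_assoc, pi1_pair. reflexivity. }
  rewrite K, hxid_pair, pi1_pair. reflexivity.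
Qed.


Lemma sharp_recover (a : Hom (fob G C) C) : sharp FA a \o ph C \o fmap G (et C) = a.
Proof.
  rewrite sharp_phi, <- comp_assoc, <- fmap_comp, sharp_eta, fmap_id, comp_id_r. reflexivity.
Qed.

Lemma sharp_is_final (a : Hom (fob G C) C) (Ia : interp a) :
  c \o sharp FA a = fmap H (sharp FA a) \o lift (fmap H (et C) \o c).
Proof.
  pose proof (sharp_coalg a Ia (fmap H (et C) \o c) (idm C)) as S.
  rewrite hat_id, !comp_id_r in S. apply S.
  rewrite comp_assoc, <- fmap_comp, sharp_eta, fmap_id, comp_id_l. reflexivity.
Qed.

Lemma interp_unique (a1 a2 : Hom (fob G C) C) : interp a1 -> interp a2 -> a1 = a2.
Proof.
  intros I1 I2.
  assert (E : sharp FA a1 = sharp FA a2).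
  { eapply coalg_uniq; apply sharp_is_final; assumption. }
  rewrite <- (sharp_recover a1), <- (sharp_recover a2), E. reflexivity.
Qed.


Lemma interp_exists : exists a, interp a.
Proof.
  set (z := lift (fmap H (et C) \o c)).
  destruct (Hterm (T C) z) as [h [Eh _]].
  set (a := h \o ph C \o fmap G (et C)).
  assert (S1 : h \o et C = idm C).
  { apply (coalg_uniq c).
    - rewrite comp_assoc, Eh, <- comp_assoc. unfold z. rewrite lift_eta.
      rewrite comp_assoc, <- fmap_comp. reflexivity.
    - rewrite fmap_id, comp_id_l, comp_id_r. reflexivity. }
  assert (S2 : h \o mu C = h \o hat FA h).
  { apply (coalg_uniq (lift (fmap H (et (T C)) \o z))).
    - rewrite comp_assoc, Eh, <- comp_assoc. unfold z. rewrite (lift_mu Cat P H G FA r Hr).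
      rewrite comp_assoc, <- fmap_comp. reflexivity.
    - rewrite comp_assoc, Eh, <- comp_assoc. unfold z.
      rewrite (lift_hat Cat P H G FA r Hr h (fmap H (et (T C)) \o z) (fmap H (et C) \o c)).
      + rewrite comp_assoc, <- fmap_comp. reflexivity.
      + rewrite <- comp_assoc, Eh, comp_assoc, <- fmap_comp, <- hat_eta. unfold z.
        rewrite comp_assoc, <- fmap_comp. reflexivity. }
  assert (PZ : pair P z (idm (T C)) \o (et C \o h) = hxid P H (et C \o h) \o pair P z (idm (T C))).
  { rewrite hxid_pair, pair_comp, comp_id_r, comp_id_l. f_equal.
    rewrite comp_assoc. unfold z at 1. rewrite lift_eta, <- comp_assoc, Eh, comp_assoc, fmap_comp.
    reflexivity. }
  assert (PC : pair P z (idm (T C)) \o et C = hxid P H (et C) \o pair P c (idm C)).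
  { rewrite hxid_pair, pair_comp, comp_id_r, comp_id_l. f_equal.
    unfold z. rewrite lift_eta. reflexivity. }
  pose proof (lift_phi Cat P H G FA r (fmap H (et C) \o c)) as LP. fold z in LP.
  assert (Key : forall (k : Hom (T C) (T (T C))), h \o mu C \o (k \o hat FA h) = h \o hat FA h ->
     h \o mu C \o (k \o hat FA h) = h \o mu C).
  { intros k E. rewrite E, S2. reflexivity. }
  assert (S3 : h \o ph C = a \o fmap G h).
  { apply c_mono. unfold a. ra. rewrite !(compR _ _ _ _ Eh). ra.
    rewrite (compR _ _ _ _ LP), LP. ra. rewrite <- !(fmap_comp _ G). rewrite PZ, (fmap_comp _ G).
    rewrite (compR _ _ _ _ (Hr _ _ _)). rewrite !comp_assoc, <- !fmap_comp.
    rewrite hat_comp, Key. reflexivity.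
    rewrite <- (comp_assoc _ _ _ _ _ h (mu C) (hat FA (et C) \o hat FA h)).
    rewrite (comp_assoc _ _ _ _ _ (mu C)), mu_hat_eta, comp_id_l. reflexivity. }
  assert (S4 : h = sharp FA a).
  { apply ext_ch; assumption. }
  exists a. unfold interp. rewrite <- S4. unfold a. ra. rewrite (compR _ _ _ _ Eh). ra.
  rewrite (compR _ _ _ _ LP). ra. rewrite <- (fmap_comp _ G), PC, (fmap_comp _ G).
  rewrite (compR _ _ _ _ (Hr _ _ _)). rewrite !comp_assoc, <- !fmap_comp.
  rewrite <- (comp_assoc _ _ _ _ _ h (mu C) (hat FA (et C))), mu_hat_eta, comp_id_r. reflexivity.
Qed.



Lemma interp_cia (a : Hom (fob G C) C) (Ia : interp a) :
  is_cia Q (HFhat0 H FA) (HFhat1 H FA) C (cinv \o fmap H (sharp FA a)).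
Proof.
  intros X x. unfold HFhat0, HFhat1 in *.
  set (gm := copair Q (copair Q (fmap H (hat FA (inl Q X C))) (fmap H (et (coprodO Q X C) \o (inr Q X C)) \o c) \o x)
                      (fmap H (et (coprodO Q X C) \o (inr Q X C)) \o c) : Hom (coprodO Q X C) (fob H (T (coprodO Q X C)))).
  destruct (Hterm (T (coprodO Q X C)) (lift gm)) as [h [Eh _]].
  assert (F0 : c \o (h \o et (coprodO Q X C)) = fmap H h \o gm).
  { rewrite comp_assoc, Eh, <- comp_assoc, lift_eta. reflexivity. }
  assert (Sa : h \o et (coprodO Q X C) \o (inr Q X C) = idm C).
  { apply (coalg_uniq c).
    - rewrite comp_assoc, F0. rewrite <- comp_assoc. unfold gm. rewrite copair_inr.
      rewrite comp_assoc, <- fmap_comp, comp_assoc. reflexivity.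
    - rewrite fmap_id, comp_id_l, comp_id_r. reflexivity. }
  assert (Sb : h \o mu (coprodO Q X C) = sharp FA a \o hat FA h).
  { apply (coalg_uniq (lift (fmap H (et (T (coprodO Q X C))) \o lift gm))).
    - rewrite comp_assoc, Eh, <- comp_assoc, (lift_mu Cat P H G FA r Hr), comp_assoc, <- fmap_comp.
      reflexivity.
    - apply sharp_coalg. exact Ia. rewrite Eh, comp_assoc, <- fmap_comp, <- comp_assoc, hat_eta.
      rewrite comp_assoc, sharp_eta, comp_id_l. reflexivity. }
  assert (PH : pair P c (idm C) \o h = hxid P H h \o pair P (lift gm) (idm (T (coprodO Q X C)))).
  { rewrite hxid_pair, pair_comp, Eh, comp_id_l, comp_id_r. reflexivity. }
  assert (Sc : h \o ph (coprodO Q X C) = a \o fmap G h).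
  { apply c_mono. rewrite comp_assoc, Eh, <- comp_assoc, lift_phi.
    rewrite (compR _ _ _ _ Ia). ra. rewrite <- (fmap_comp _ G), PH, (fmap_comp _ G).
    rewrite (compR _ _ _ _ (Hr _ _ _)). rewrite !comp_assoc, <- !fmap_comp, Sb. reflexivity. }
  assert (Sd : h = sharp FA a \o hat FA (h \o et (coprodO Q X C))).
  { rewrite <- ext_sharp. apply ext_ch. reflexivity. exact Sc. }
  assert (F2 : forall m : Hom (T (coprodO Q X C)) C, m \o et (coprodO Q X C) \o (inr Q X C) = idm C ->
            fmap H m \o (fmap H (et (coprodO Q X C) \o (inr Q X C)) \o c) = c).
  { intros m Em. rewrite comp_assoc, <- fmap_comp, comp_assoc, Em, fmap_id, comp_id_l. reflexivity. }
  exists (h \o et (coprodO Q X C) \o (inl Q X C)). split.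
  - apply c_mono. rewrite copair_coprodmap, comp_id_r.
    rewrite (comp_assoc _ _ _ _ _ c (copair Q _ _)), comp_copair.
    rewrite <- (comp_assoc _ _ _ _ _ cinv), (comp_assoc _ _ _ _ _ c cinv), Hcinv2, comp_id_l, comp_id_r.
    rewrite comp_assoc, F0. rewrite <- comp_assoc. unfold gm at 1. rewrite copair_inl.
    rewrite comp_assoc, comp_copair, F2 by exact Sa. rewrite <- !fmap_comp.
    assert (Ei : h \o hat FA (inl Q X C) = sharp FA a \o hat FA (h \o et (coprodO Q X C) \o inl Q X C)).
    { transitivity (sharp FA a \o hat FA (h \o et (coprodO Q X C)) \o hat FA (inl Q X C)).
      { rewrite <- Sd. reflexivity. }
      rewrite <- comp_assoc, <- hat_comp. reflexivity. }
    rewrite Ei. reflexivity.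
  - intros d' Ed'.
    set (g' := copair Q d' (idm C)).
    assert (Eg : sharp FA a \o hat FA g' \o et (coprodO Q X C) = g').
    { rewrite <- comp_assoc, hat_eta, comp_assoc, sharp_eta, comp_id_l. reflexivity. }
    assert (Eg2 : sharp FA a \o hat FA g' \o et (coprodO Q X C) \o (inr Q X C) = idm C).
    { rewrite Eg. unfold g'. apply copair_inr. }
    assert (Eh2 : h = sharp FA a \o hat FA g').
    { apply (coalg_uniq (lift gm)). exact Eh. apply sharp_coalg. exact Ia.
      apply copair_ext.
      - unfold gm. rewrite <- !comp_assoc, copair_inl. unfold g'. rewrite copair_inl.
        rewrite (f_equal (fun u => c \o u) Ed'). rewrite copair_coprodmap, comp_id_r.
        rewrite (comp_assoc _ _ _ _ _ c (copair Q _ _)), comp_copair.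
        rewrite <- (comp_assoc _ _ _ _ _ cinv), (comp_assoc _ _ _ _ _ c cinv), Hcinv2, comp_id_l, comp_id_r.
        rewrite comp_assoc, comp_copair, F2 by exact Eg2.
        rewrite <- !fmap_comp, <- comp_assoc, <- hat_comp. unfold g'. rewrite copair_inl. reflexivity.
      - unfold gm. rewrite <- !comp_assoc, copair_inr. unfold g'. rewrite copair_inr, comp_id_r.
        rewrite F2 by exact Eg2. reflexivity. }
    rewrite Eh2, Eg. unfold g'. apply copair_inl.
Qed.

End Final.


Section Sum.
Context (Cat : Category) (Q : BinCoproducts Cat) (K V : Functor Cat).

Lemma sumF1_id (A : Cat) : sumF1 Q K V A A (idm A) = idm (sumF0 Q K V A).
Proof.
  unfold sumF1, coprodmap. rewrite !fmap_id, !comp_id_r. apply copair_ext.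
  - rewrite copair_inl, comp_id_l. reflexivity.
  - rewrite copair_inr, comp_id_l. reflexivity.
Qed.

Lemma sumF1_comp (A B D : Cat) (g : Hom B D) (f : Hom A B) :
  sumF1 Q K V A D (g \o f) = sumF1 Q K V B D g \o sumF1 Q K V A B f.
Proof.
  unfold sumF1, sumF0. symmetry. unfold coprodmap at 1. rewrite copair_coprodmap. unfold coprodmap.
  rewrite !fmap_comp, !comp_assoc. reflexivity.
Qed.

Definition Fsum : Functor Cat := Build_Functor Cat (sumF0 Q K V) (sumF1 Q K V) sumF1_id sumF1_comp.

End Sum.

Section Main.
Context (Cat : Category) (P : BinProducts Cat) (Q : BinCoproducts Cat)
  (H K V : Functor Cat)
  (FK : FreeAlgs (fob K) (@fmap Cat K))
  (FF : FreeAlgs (sumF0 Q K V) (sumF1 Q K V)).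

Notation Fs := (Fsum Cat Q K V).

Lemma hatF_phi {X Y : Cat} (f : Hom X Y) :
  hat FF f \o phi FF X = phi FF Y \o sumF1 Q K V _ _ (hat FF f).
Proof. exact (hat_phi Cat Fs FF f). Qed.
Lemma hatF_eta {X Y : Cat} (f : Hom X Y) : hat FF f \o eta FF X = eta FF Y \o f.
Proof. exact (hat_eta Cat Fs FF f). Qed.

Lemma sumF1_inl {A B : Cat} (f : Hom A B) :
  sumF1 Q K V A B f \o inl Q _ _ = inl Q _ _ \o fmap K f.
Proof. unfold sumF1, coprodmap, sumF0. rewrite copair_inl. reflexivity. Qed.

Lemma copair_inl_s {A D : Cat} (u : Hom (fob K A) D) (v : Hom (fob V A) D) :
  @comp Cat _ (sumF0 Q K V A) _ (copair Q u v) (inl Q _ _) = u.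
Proof. apply copair_inl. Qed.
Lemma copair_inr_s {A D : Cat} (u : Hom (fob K A) D) (v : Hom (fob V A) D) :
  @comp Cat _ (sumF0 Q K V A) _ (copair Q u v) (inr Q _ _) = v.
Proof. apply copair_inr. Qed.

Definition jm (X : Cat) : Hom (hob FK X) (hob FF X) :=
  ext FK (phi FF X \o inl Q _ _) (eta FF X).

Lemma jm_nat {X Y : Cat} (f : Hom X Y) : jm Y \o hat FK f = hat FF f \o jm X.
Proof.
  transitivity (ext FK (phi FF Y \o inl Q _ _) (eta FF Y \o f)).
  - apply (ext_ch Cat K FK).
    + rewrite <- comp_assoc, (hat_eta Cat K FK), comp_assoc. unfold jm. rewrite ext_eta. reflexivity.
    + apply (alg_hom_comp Cat K) with (b := phi FK Y). apply (hat_phi Cat K FK). apply ext_hom.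
  - symmetry. apply (ext_ch Cat K FK).
    + unfold jm. rewrite <- comp_assoc, ext_eta. apply hatF_eta.
    + rewrite <- comp_assoc. unfold jm at 1. rewrite ext_hom.
      rewrite !comp_assoc, hatF_phi, <- (comp_assoc _ _ _ _ _ (phi FF Y)), sumF1_inl.
      rewrite <- !comp_assoc, <- fmap_comp. reflexivity.
Qed.

Lemma sharpF_phi {A : Cat} (a : Hom (sumF0 Q K V A) A) :
  sharp FF a \o phi FF A = a \o sumF1 Q K V _ _ (sharp FF a).
Proof. exact (sharp_phi Cat Fs FF a). Qed.
Lemma sharpF_eta {A : Cat} (a : Hom (sumF0 Q K V A) A) : sharp FF a \o eta FF A = idm A.
Proof. exact (sharp_eta Cat Fs FF a). Qed.

Lemma sharp_j {C : Cat} (a : Hom (sumF0 Q K V C) C) :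
  sharp FF a \o jm C = sharp FK (a \o inl Q _ _).
Proof.
  unfold sharp at 2. apply (ext_ch Cat K FK).
  - rewrite <- comp_assoc. unfold jm. rewrite ext_eta. apply sharpF_eta.
  - rewrite <- comp_assoc. unfold jm at 1. rewrite ext_hom.
    rewrite !comp_assoc, sharpF_phi, <- (comp_assoc _ _ _ _ _ a), sumF1_inl.
    rewrite <- !comp_assoc, <- fmap_comp. reflexivity.
Qed.

Context (l : forall X : Cat, Hom (fob K (prodO P (fob H X) X)) (fob H (hob FK X)))
  (Hl : is_GSOS_rule P H K FK l)
  (e : forall X : Cat, Hom (fob V (prodO P (fob H X) X)) (fob H (hob FF X)))
  (He : is_rps P Q H K V FF e).

Definition rho (X : Cat) : Hom (sumF0 Q K V (prodO P (fob H X) X)) (fob H (hob FF X)) :=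
  copair Q (fmap H (jm X) \o l X) (e X).

Lemma rho_nat : is_GSOS_rule P H Fs FF rho.
Proof.
  intros X Y f. change (fmap Fs (hxid P H f)) with (sumF1 Q K V _ _ (hxid P H f)).
  unfold rho, sumF1.
  etransitivity. { apply copair_coprodmap. }
  symmetry. etransitivity. { apply comp_copair. } symmetry. f_equal.
  - ra. rewrite Hl. rewrite !comp_assoc, <- !fmap_comp, jm_nat. reflexivity.
  - apply He.
Qed.

Lemma rhs_split {C : Cat} (c : Hom C (fob H C)) (a : Hom (sumF0 Q K V C) C) :
  fmap H (sharp FF a) \o rho C \o fmap Fs (pair P c (idm C)) =
  copair Q (fmap H (sharp FK (a \o inl Q _ _)) \o l C \o fmap K (pair P c (idm C)))
           (fmap H (sharp FF a) \o e C \o fmap V (pair P c (idm C))).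
Proof.
  change (fmap Fs (pair P c (idm C))) with (sumF1 Q K V _ _ (pair P c (idm C))).
  unfold rho, sumF1.
  transitivity (fmap H (sharp FF a) \o copair Q ((fmap H (jm C) \o l C) \o fmap K (pair P c (idm C)))
     (e C \o fmap V (pair P c (idm C)))).
  { rewrite <- comp_assoc. f_equal. apply copair_coprodmap. }
  etransitivity. { apply comp_copair. } f_equal.
  - rewrite <- sharp_j, fmap_comp. ra. reflexivity.
  - ra. reflexivity.
Qed.

End Main.
Theorem mainTheorem10
  (Cat : Category) (P : BinProducts Cat) (Q : BinCoproducts Cat)
  (H K V : Functor Cat)
  (FK : FreeAlgs (fob K) (@fmap Cat K))
  (FF : FreeAlgs (sumF0 Q K V) (sumF1 Q K V))
  (C : Cat) (c : Hom C (fob H C)) (Hterm : is_terminal_coalg H C c)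
  (cinv : Hom (fob H C) C) (Hcinv1 : cinv \o c = idm C) (Hcinv2 : c \o cinv = idm (fob H C))
  (l : forall X : Cat, Hom (fob K (prodO P (fob H X) X)) (fob H (hob FK X)))
  (Hl : is_GSOS_rule P H K FK l)
  (b : Hom (fob K C) C)
  (Hb : c \o b = fmap H (sharp FK b) \o l C \o fmap K (pair P c (idm C)))
  (e : forall X : Cat, Hom (fob V (prodO P (fob H X) X)) (fob H (hob FF X)))
  (He : is_rps P Q H K V FF e) :
  exists s : Hom (fob V C) C,
    s = cinv \o fmap H (sharp FF (copair Q b s)) \o e C \o fmap V (pair P c (idm C))
    /\ (forall s' : Hom (fob V C) C,
          s' = cinv \o fmap H (sharp FF (copair Q b s')) \o e C \o fmap V (pair P c (idm C)) ->
          s' = s)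
    /\ is_cia Q (HFhat0 H FF) (HFhat1 H FF) C (cinv \o fmap H (sharp FF (copair Q b s))).
Proof.
  set (Fs := Fsum Cat Q K V).
  set (rh := rho Cat P Q H K V FK FF l e).
  pose proof (rho_nat Cat P Q H K V FK FF l Hl e He) as Hrho. fold rh in Hrho.
  destruct (interp_exists Cat P H Fs FF rh Hrho C c Hterm cinv Hcinv1) as [a0 Ia0].
  assert (Ia0' : c \o a0 = copair Q (fmap H (sharp FK (a0 \o inl Q _ _)) \o l C \o fmap K (pair P c (idm C)))
           (fmap H (sharp FF a0) \o e C \o fmap V (pair P c (idm C)))).
  { rewrite <- rhs_split. exact Ia0. }
  assert (Eb : c \o (a0 \o inl Q _ _) = fmap H (sharp FK (a0 \o inl Q _ _)) \o l C \o fmap K (pair P c (idm C))).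
  { rewrite comp_assoc, Ia0'. apply copair_inl. }
  pose proof (interp_unique Cat P H K FK l Hl C c Hterm _ _ Eb Hb) as Eb'.
  set (s := a0 \o inr Q _ _).
  assert (Ea0 : a0 = copair Q b s).
  { apply copair_ext. rewrite copair_inl. exact Eb'. rewrite copair_inr. reflexivity. }
  assert (Is : forall s' : Hom (fob V C) C,
     c \o s' = fmap H (sharp FF (copair Q b s')) \o e C \o fmap V (pair P c (idm C)) ->
     interp Cat P H Fs FF rh C c (copair Q b s')).
  { intros s' Es'. unfold interp. etransitivity; [| symmetry; apply rhs_split]. unfold Fs; cbn [fob Fsum sumF0]. apply copair_ext.
    - rewrite <- comp_assoc, copair_inl, copair_inl_s. exact Hb.
    - rewrite <- comp_assoc, copair_inr, copair_inr_s. exact Es'. }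
  assert (Es : c \o s = fmap H (sharp FF (copair Q b s)) \o e C \o fmap V (pair P c (idm C))).
  { rewrite <- Ea0. unfold s. rewrite comp_assoc, Ia0'. apply copair_inr. }
  exists s. split; [|split].
  - transitivity (cinv \o (c \o s)). { rewrite comp_assoc, Hcinv1, comp_id_l. reflexivity. }
    rewrite Es, !comp_assoc. reflexivity.
  - intros s' Es'.
    assert (Ec : c \o s' = fmap H (sharp FF (copair Q b s')) \o e C \o fmap V (pair P c (idm C))).
    { rewrite (f_equal (fun u => c \o u) Es'). rewrite !comp_assoc, Hcinv2, comp_id_l. reflexivity. }
    pose proof (interp_unique Cat P H Fs FF rh Hrho C c Hterm _ _ (Is s' Ec) Ia0) as E2.
    rewrite <- (copair_inr _ Q _ _ _ b s'), E2. reflexivity.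
  - rewrite <- Ea0. exact (interp_cia Cat P Q H Fs FF rh Hrho C c Hterm cinv Hcinv1 Hcinv2 a0 Ia0).
Qed.
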